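(* Let $(X,f)$ be a dynamical system and $\mathbf{a}=(a_1,\dots,a_r)\in\mathbb{N}^r$. The following are equivalent: (1) $(X,f)$ is $\mathbf{a}$-transitive; (2) $(X,f)$ is $\nabla(\mathcal{F}[\mathbf{a}])$-point transitive; (3) $Trans(X,f)=Trans_{\nabla(\mathcal{F}[\mathbf{a}])}(X,f)\neq\emptyset$.
   Context: A dynamical system is a pair $(X,f)$ with $X$ a compact metric space and $f:X\to X$ continuous. $\mathbb{N}=\{1,2,\dots\}$, $\mathbb{Z}_+=\{0,1,2,\dots\}$. $N(U,V)=\{n\in\mathbb{N}: U\cap f^{-n}(V)\neq\emptyset\}$, $N(x,U)=\{n\in\mathbb{N}: f^n(x)\in U\}$. $(X,f)$ is transitive if $N(U,V)\neq\emptyset$ for all non-empty open $U,V$. A transitive point is an $x$ with $\omega(x,f)=X$; $Trans(X,f)$ is the set of transitive points. For a family $\mathcal{F}$ of subsets of $\mathbb{N}$, $x$ is an $\mathcal{F}$-transitive point if $N(x,U)\in\mathcal{F}$ for every non-empty open $U$; $Trans_{\mathcal{F}}(X,f)$ is the set of these, and $(X,f)$ is $\mathcal{F}$-point transitive if it is non-empty. For $F\subset\mathbb{N}$, $F-F=\{a-b:a,b\in F,\ a>b\}$ and $\nabla(\mathcal{F})=\{F\subset\mathbb{N}: F-F\in\mathcal{F}\}$. For $\mathbf{a}\in\mathbb{N}^r$, $(X,f)$ is $\mathbf{a}$-transitive if $(X^r,f^{a_1}\times\dots\times f^{a_r})$ is transitive. $\mathcal{F}[\mathbf{a}]$ is the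 collection of all $F\subset\mathbb{N}$ such that for every $(n_1,\dots,n_r)\in\mathbb{Z}_+^r$ there exists $k\in\mathbb{N}$ with $ka_i+n_i\in F$ for all $i=1,\dots,r$. *)

(* Defs.v *)
From Stdlib Require Import Reals Arith.
Open Scope R_scope.

Definition is_metric {X : Type} (d : X -> X -> R) : Prop :=
  (forall x y, 0 <= d x y) /\
  (forall x y, d x y = 0 <-> x = y) /\
  (forall x y, d x y = d y x) /\
  (forall x y z, d x z <= d x y + d y z).

Definition mopen {X : Type} (d : X -> X -> R) (U : X -> Prop) : Prop :=
  forall x, U x -> exists eps, 0 < eps /\ forall y, d x y < eps -> U y.

Definition mcompact {X : Type} (d : X -> X -> R) : Prop :=
  forall (I : Type) (U : I -> X -> Prop),
    (forall i, mopen d (U i)) -> (forall x, exists i, U i x) ->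
    exists l : list I, forall x, exists i, List.In i l /\ U i x.

Definition mcontinuous {X : Type} (d : X -> X -> R) (f : X -> X) : Prop :=
  forall x eps, 0 < eps -> exists delta, 0 < delta /\
    forall y, d x y < delta -> d (f x) (f y) < eps.

Definition iter {X : Type} (n : nat) (f : X -> X) (x : X) : X := Nat.iter n f x.

Definition transitive_top {T : Type} (opn : (T -> Prop) -> Prop) (g : T -> T) : Prop :=
  forall U V, opn U -> opn V -> (exists x, U x) -> (exists y, V y) ->
    exists n, (1 <= n)%nat /\ exists x, U x /\ V (iter n g x).

(* index set {0,...,r-1} and X^r with the product (= sup metric) topology *)
Definition idx (r : nat) := {i : nat | (i < r)%nat}.

Definition prod_open {X : Type} (d : X -> X -> R) (r : nat)
  (W : (idx r -> X) -> Prop) : Prop :=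
  forall p, W p -> exists eps, 0 < eps /\
    forall q, (forall i, d (p i) (q i) < eps) -> W q.

Definition a_transitive {X : Type} (d : X -> X -> R) (f : X -> X)
  (r : nat) (a : idx r -> nat) : Prop :=
  transitive_top (prod_open d r) (fun p i => iter (a i) f (p i)).

Definition family := (nat -> Prop) -> Prop.

Definition Nhit {X : Type} (f : X -> X) (x : X) (U : X -> Prop) : nat -> Prop :=
  fun n => (1 <= n)%nat /\ U (iter n f x).

Definition diffset (F : nat -> Prop) : nat -> Prop :=
  fun m => exists a b, F a /\ F b /\ (b < a)%nat /\ m = (a - b)%nat.

Definition nabla (Fam : family) : family := fun F => Fam (diffset F).

Definition Fa (r : nat) (a : idx r -> nat) : family :=
  fun F => forall n : idx r -> nat, exists k, (1 <= k)%nat /\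
    forall i, F (k * a i + n i)%nat.

Definition omega {X : Type} (d : X -> X -> R) (f : X -> X) (x : X) : X -> Prop :=
  fun y => forall eps N, 0 < eps -> exists n, (N <= n)%nat /\ d (iter n f x) y < eps.

Definition Trans {X : Type} (d : X -> X -> R) (f : X -> X) : X -> Prop :=
  fun x => forall y, omega d f x y.

Definition TransF {X : Type} (d : X -> X -> R) (f : X -> X) (Fam : family) : X -> Prop :=
  fun x => forall U, mopen d U -> (exists y, U y) -> Fam (Nhit f x U).

Definition F_point_transitive {X : Type} (d : X -> X -> R) (f : X -> X) (Fam : family) : Prop :=
  exists x, TransF d f Fam x.

(* Main.v *)
Require Import Defs.
From Stdlib Require Import Reals Arith Lia Lra ClassicalEpsilon List Cantor.
Open Scope R_scope.

Lemma iter_add {X} (f : X -> X) m n x : iter (m + n) f x = iter m f (iter n f x).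
Proof. unfold iter; induction m; simpl; [reflexivity| now rewrite IHm]. Qed.

Lemma iter_cont {X} (d : X -> X -> R) f n : mcontinuous d f -> mcontinuous d (iter n f).
Proof.
  intros Hf; induction n; intros x eps He.
  - exists eps; split; [lra| intros y Hy; exact Hy].
  - destruct (Hf (iter n f x) eps He) as [d1 [Hd1 H1]].
    destruct (IHn x d1 Hd1) as [d2 [Hd2 H2]].
    exists d2; split; [lra|]. intros y Hy. apply H1, H2, Hy.
Qed.

Lemma preim_open {X} (d : X -> X -> R) g U : mcontinuous d g -> mopen d U -> mopen d (fun y => U (g y)).
Proof.
  intros Hg HU x Hx. destruct (HU _ Hx) as [e [He H]].
  destruct (Hg x e He) as [dl [Hdl H2]]. exists dl; split; auto.
Qed.

Lemma inter_open {X} (d : X -> X -> R) U V : mopen d U -> mopen d V -> mopen d (fun y => U y /\ V y).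
Proof.
  intros HU HV x [Ux Vx]. destruct (HU _ Ux) as [e1 [He1 H1]]. destruct (HV _ Vx) as [e2 [He2 H2]].
  exists (Rmin e1 e2); split; [now apply Rmin_glb_lt|].
  intros y Hy; split; [apply H1|apply H2]; eapply Rlt_le_trans; eauto; [apply Rmin_l|apply Rmin_r].
Qed.

Lemma ball_open {X} (d : X -> X -> R) c e : is_metric d -> mopen d (fun y => d c y < e).
Proof.
  intros [Hp [Hz [Hs Ht]]] x Hx. exists (e - d c x); split; [lra|].
  intros y Hy. pose proof (Ht c x y); lra.
Qed.

Lemma fin_min (P : nat -> R -> Prop) r :
  (forall i e e', 0 < e' <= e -> P i e -> P i e') ->
  (forall i, (i < r)%nat -> exists e, 0 < e /\ P i e) ->
  exists e, 0 < e /\ forall i, (i < r)%nat -> P i e.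
Proof.
  intros Hm; induction r; intros H.
  - exists 1; split; [lra| intros; lia].
  - destruct IHr as [e1 [He1 H1]]. { intros; apply H; lia. }
    destruct (H r ltac:(lia)) as [e2 [He2 H2]].
    exists (Rmin e1 e2); split; [now apply Rmin_glb_lt|].
    intros i Hi. assert (Rmin e1 e2 <= e1) by apply Rmin_l. assert (Rmin e1 e2 <= e2) by apply Rmin_r.
    assert (0 < Rmin e1 e2) by (now apply Rmin_glb_lt).
    destruct (Nat.eq_dec i r) as [->|].
    + eapply Hm; [|exact H2]; lra.
    + eapply Hm; [|apply H1; lia]; lra.
Qed.

Lemma fin_min_idx r (Q : idx r -> R -> Prop) :
  (forall i e e', 0 < e' <= e -> Q i e -> Q i e') ->
  (forall j, exists e, 0 < e /\ Q j e) ->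
  exists e, 0 < e /\ forall j, Q j e.
Proof.
  intros Hm H.
  destruct (fin_min (fun i e => forall j : idx r, proj1_sig j = i -> Q j e) r) as [e [He H1]].
  - intros i e e' He' Hq j Hj; eapply Hm; eauto.
  - intros i Hi. destruct (H (exist _ i Hi)) as [e [He Hq]]. exists e; split; auto.
    intros [i' h'] Heq; simpl in Heq; subst. rewrite (Peano_dec.le_unique _ _ h' Hi). exact Hq.
  - exists e; split; auto. intros [i h]. apply (H1 i h). reflexivity.
Qed.

Lemma prod_open_of {X} (d : X -> X -> R) r (O : idx r -> X -> Prop) :
  (forall i, mopen d (O i)) -> prod_open d r (fun P => forall i, O i (P i)).
Proof.
  intros HO P HP.
  destruct (fin_min_idx r (fun j e => forall y, d (P j) y < e -> O j y)) as [e [He H]].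
  - intros i e e' He' Hq y Hy. apply Hq. lra.
  - intros j. exact (HO j (P j) (HP j)).
  - exists e; split; auto.
Qed.

Lemma choice' {A B} (Rl : A -> B -> Prop) : (forall x, exists y, Rl x y) -> exists g, forall x, Rl x (g x).
Proof.
  intros H. exists (fun x => proj1_sig (constructive_indefinite_description _ (H x))).
  intros x; apply proj2_sig.
Qed.

Lemma iterG {X} (f : X -> X) r (a : idx r -> nat) n P i :
  iter n (fun p i => iter (a i) f (p i)) P i = iter (n * a i) f (P i).
Proof.
  induction n; [reflexivity|].
  change (iter (a i) f (iter n (fun p i => iter (a i) f (p i)) P i) = iter (S n * a i) f (P i)).
  rewrite IHn, <- iter_add. f_equal.
Qed.
Lemma TransF_unb {X} (d : X -> X -> R) f r (a : idx r -> nat) x U :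
  (1 <= r)%nat -> TransF d f (nabla (Fa r a)) x -> mopen d U -> (exists y, U y) ->
  forall M, exists n, (M <= n)%nat /\ (1 <= n)%nat /\ U (iter n f x).
Proof.
  intros Hr HT HU Hne M. specialize (HT U HU Hne (fun _ => M)).
  destruct HT as [k [Hk H]]. destruct (H (exist _ 0%nat Hr)) as [s [t [Hs [Ht [Hlt Heq]]]]].
  exists s. destruct Hs as [Hs1 Hs2]. split; [lia|]. split; auto.
Qed.

Lemma TransF_Trans {X} (d : X -> X -> R) f r (a : idx r -> nat) x :
  is_metric d -> (1 <= r)%nat -> TransF d f (nabla (Fa r a)) x -> Trans d f x.
Proof.
  intros Hd Hr HT y eps N He.
  destruct (TransF_unb d f r a x (fun w => d y w < eps) Hr HT (ball_open d y eps Hd)) with (M := N)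
    as [n [Hn [_ Hu]]].
  { exists y. destruct Hd as [_ [Hz _]]. rewrite (proj2 (Hz y y) eq_refl). exact He. }
  exists n; split; auto. destruct Hd as [_ [_ [Hs _]]]. now rewrite Hs.
Qed.

Lemma two_to_one {X} (d : X -> X -> R) f r (a : idx r -> nat) x :
  is_metric d -> mcontinuous d f -> (1 <= r)%nat -> TransF d f (nabla (Fa r a)) x -> a_transitive d f r a.
Proof.
  intros Hd Hf Hr HT W1 W2 HW1 HW2 [p Hp] [q Hq].
  destruct (HW1 p Hp) as [e1 [He1 H1]]. destruct (HW2 q Hq) as [e2 [He2 H2]].
  assert (Hz : forall c e, 0 < e -> exists y, d c y < e).
  { intros c e He; exists c. destruct Hd as [_ [Hz _]]. now rewrite (proj2 (Hz c c) eq_refl). }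
  destruct (choice' (fun i l => d (q i) (iter l f x) < e2)) as [l Hl].
  { intros i. destruct (TransF_unb d f r a x _ Hr HT (ball_open d (q i) e2 Hd) (Hz _ _ He2) 0%nat)
      as [n [_ [_ Hn]]]. eauto. }
  destruct (choice' (fun i m => (l i <= m)%nat /\ d (p i) (iter m f x) < e1)) as [m Hm].
  { intros i. destruct (TransF_unb d f r a x _ Hr HT (ball_open d (p i) e1 Hd) (Hz _ _ He1) (l i))
      as [n [Hn1 [_ Hn]]]. eauto. }
  set (O := fun y => forall i, d (p i) (iter (m i) f y) < e1 /\ d (q i) (iter (l i) f y) < e2).
  assert (HO : mopen d O).
  { intros y Hy.
    destruct (fin_min_idx r (fun j e => forall w, d y w < e ->
       d (p j) (iter (m j) f w) < e1 /\ d (q j) (iter (l j) f w) < e2)) as [e [He H]].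
    - intros i e e' He' Hq' w Hw. apply Hq'. lra.
    - intros j. apply (inter_open d _ _ (preim_open d _ _ (iter_cont d f (m j) Hf) (ball_open d (p j) e1 Hd))
                          (preim_open d _ _ (iter_cont d f (l j) Hf) (ball_open d (q j) e2 Hd))).
      apply Hy.
    - exists e; split; auto. intros w Hw i. apply H; auto. }
  assert (Ox : O x). { intros i; split; [apply Hm|apply Hl]. }
  destruct (HT O HO (ex_intro _ x Ox) (fun i => (m i - l i)%nat)) as [k [Hk Hks]].
  destruct (choice' (fun i st => Nhit f x O (fst st) /\ Nhit f x O (snd st) /\ (snd st < fst st)%nat
        /\ (k * a i + (m i - l i))%nat = (fst st - snd st)%nat)) as [st Hst].
  { intros i. destruct (Hks i) as [s [t [Hs [Ht [Hlt Heq]]]]]. exists (s, t); simpl; auto. }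
  exists k; split; auto. exists (fun i => iter (m i + snd (st i)) f x). split.
  - apply H1. intros i. rewrite iter_add. destruct (Hst i) as [_ [[_ Ht] _]]. apply (Ht i).
  - apply H2. intros i. rewrite iterG, <- iter_add.
    destruct (Hst i) as [[_ Hs] [_ [Hlt Heq]]]. destruct (Hm i) as [Hml _].
    replace (k * a i + (m i + snd (st i)))%nat with (l i + fst (st i))%nat by lia.
    rewrite iter_add. apply (Hs i).
Qed.
Lemma hit_omega {X} (d : X -> X -> R) f x O y :
  is_metric d -> Trans d f x -> mopen d O -> O y -> forall N, exists t, (N <= t)%nat /\ O (iter t f x).
Proof.
  intros Hd HT HO Hy N. destruct (HO y Hy) as [e [He H]].
  destruct (HT y e N He) as [n [Hn Hd']]. exists n; split; auto. apply H.
  destruct Hd as [_ [_ [Hs _]]]. now rewrite Hs.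
Qed.

Lemma return_diff {X} (d : X -> X -> R) f x U z m :
  is_metric d -> mcontinuous d f -> Trans d f x -> mopen d U -> U z -> U (iter m f z) -> (1 <= m)%nat ->
  diffset (Nhit f x U) m.
Proof.
  intros Hd Hf HT HU Hz Hmz Hm.
  destruct (hit_omega d f x (fun w => U w /\ U (iter m f w)) z Hd HT
      (inter_open d _ _ HU (preim_open d _ _ (iter_cont d f m Hf) HU)) (conj Hz Hmz) 1%nat)
    as [t [Ht [H1 H2]]].
  exists (m + t)%nat, t. split; [split; [lia| now rewrite iter_add]|].
  split; [split; auto|]. split; lia.
Qed.

Lemma Trans_TransF {X} (d : X -> X -> R) f r (a : idx r -> nat) x :
  is_metric d -> mcontinuous d f -> (forall i, (1 <= a i)%nat) ->
  a_transitive d f r a -> Trans d f x -> TransF d f (nabla (Fa r a)) x.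
Proof.
  intros Hd Hf Ha HA HT U HU [y Hy] n.
  destruct (choice' (fun i z => U (iter (n i) f z))) as [z Hz].
  { intros i. destruct (hit_omega d f x U y Hd HT HU Hy (n i)) as [t [Ht Hu]].
    exists (iter (t - n i) f x). rewrite <- iter_add. now replace (n i + (t - n i))%nat with t by lia. }
  destruct (HA (fun P => forall i, U (P i)) (fun P => forall i, U (iter (n i) f (P i))))
    as [k [Hk [P [HP1 HP2]]]].
  - apply prod_open_of; auto.
  - apply (prod_open_of d r (fun i w => U (iter (n i) f w))). intros i; apply preim_open; auto.
    now apply iter_cont.
  - exists (fun _ => y); auto.
  - exists z; auto.
  - exists k; split; auto. intros i. specialize (HP2 i). rewrite iterG, <- iter_add in HP2.
    apply (return_diff d f x U (P i)); auto.
    + now rewrite Nat.add_comm.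
    + specialize (Ha i). nia.
Qed.
Lemma a_trans_trans {X} (d : X -> X -> R) f r (a : idx r -> nat) :
  (1 <= r)%nat -> (forall i, (1 <= a i)%nat) -> a_transitive d f r a ->
  forall U V, mopen d U -> mopen d V -> (exists y, U y) -> (exists y, V y) ->
  exists n, (1 <= n)%nat /\ exists z, U z /\ V (iter n f z).
Proof.
  intros Hr Ha HA U V HU HV [u Hu] [v Hv].
  destruct (HA (fun P => forall i, U (P i)) (fun P => forall i, V (P i))) as [k [Hk [P [HP1 HP2]]]].
  - apply prod_open_of; auto.
  - apply prod_open_of; auto.
  - exists (fun _ => u); auto.
  - exists (fun _ => v); auto.
  - set (i0 := exist (fun i => (i < r)%nat) 0%nat Hr).
    exists (k * a i0)%nat. split; [specialize (Ha i0); nia|].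
    exists (P i0); split; auto. rewrite <- iterG. apply HP2.
Qed.

Lemma trans_unb {X} (d : X -> X -> R) f :
  mcontinuous d f ->
  (forall U V, mopen d U -> mopen d V -> (exists y, U y) -> (exists y, V y) ->
    exists n, (1 <= n)%nat /\ exists z, U z /\ V (iter n f z)) ->
  forall U V, mopen d U -> mopen d V -> (exists y, U y) -> (exists y, V y) ->
  forall N, exists n, (N <= n)%nat /\ exists z, U z /\ V (iter n f z).
Proof.
  intros Hf HT U V HU HV HUn HVn N. induction N.
  - destruct (HT U V HU HV HUn HVn) as [n [_ Hn]]. exists n; split; [lia|auto].
  - destruct IHN as [n [Hn [z [Hz1 Hz2]]]].
    assert (HO : mopen d (fun y => U y /\ V (iter n f y))).
    { apply inter_open; auto. apply preim_open; auto. now apply iter_cont. }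
    destruct (HT _ _ HO HO (ex_intro _ z (conj Hz1 Hz2)) (ex_intro _ z (conj Hz1 Hz2)))
      as [m [Hm [y [[Hy1 _] [_ Hy2]]]]].
    exists (n + m)%nat. split; [lia|]. exists y; split; auto. now rewrite iter_add.
Qed.
Lemma step_lemma {X} (d : X -> X -> R) f :
  is_metric d -> mcontinuous d f ->
  (forall U V, mopen d U -> mopen d V -> (exists y, U y) -> (exists y, V y) ->
    forall N, exists n, (N <= n)%nat /\ exists z, U z /\ V (iter n f z)) ->
  forall p rho O N, 0 < rho -> mopen d O -> (exists y, O y) ->
  exists p' rho', 0 < rho' /\ (forall w, d p' w <= rho' -> d p w < rho) /\
    (forall w, d p' w <= rho' -> exists t, (N <= t)%nat /\ O (iter t f w)).
Proof.
  intros Hd Hf HT p rho O N Hrho HO HOn.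
  destruct Hd as [Hp [Hz [Hs Ht]]].
  destruct (HT (fun w => d p w < rho) O (ball_open d p rho (conj Hp (conj Hz (conj Hs Ht)))) HO) with (N := N)
    as [n [Hn [z [Hz1 Hz2]]]]; auto.
  { exists p. now rewrite (proj2 (Hz p p) eq_refl). }
  destruct (preim_open d _ _ (iter_cont d f n Hf) HO z Hz2) as [dl [Hdl Hdl2]].
  exists z, (Rmin dl (rho - d p z) / 2).
  assert (Rmin dl (rho - d p z) <= dl) by apply Rmin_l.
  assert (Rmin dl (rho - d p z) <= rho - d p z) by apply Rmin_r.
  assert (0 < Rmin dl (rho - d p z)) by (apply Rmin_glb_lt; lra).
  split; [lra|]. split.
  - intros w Hw. pose proof (Ht p z w). lra.
  - intros w Hw. exists n; split; auto. apply Hdl2. lra.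
Qed.

Lemma sum_ge l j : In j l -> (j <= fold_right plus 0 l)%nat.
Proof. induction l; simpl; [tauto|]. intros [->|H]; [lia| specialize (IHl H); lia]. Qed.

Lemma exists_trans {X} (d : X -> X -> R) f :
  inhabited X -> is_metric d -> mcompact d -> mcontinuous d f ->
  (forall U V, mopen d U -> mopen d V -> (exists y, U y) -> (exists y, V y) ->
    forall N, exists n, (N <= n)%nat /\ exists z, U z /\ V (iter n f z)) ->
  exists x, Trans d f x.
Proof.
  intros [x0] Hd Hc Hf HT.
  pose proof Hd as [Hp [Hz [Hs Ht]]].
  assert (Hdd : forall x, d x x = 0) by (intros; now apply Hz).
  destruct (choice' (fun (m : nat) (l : list X) => forall x, exists c, In c l /\ d c x < / INR (S m))) as [L HL].
  { intros m. destruct (Hc X (fun c y => d c y < / INR (S m))) as [l Hl].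
    - intros c; now apply ball_open.
    - intros x; exists x. rewrite Hdd. apply Rinv_0_lt_compat. apply (lt_0_INR (S m)); lia.
    - exists l. exact Hl. }
  set (task := fun j : nat => let (u, N) := of_nat j in let (m, k) := of_nat u in
        (fun w => d (nth k (L m) x0) w < / INR (S m), N)).
  assert (Htask : forall j, mopen d (fst (task j)) /\ exists y, fst (task j) y).
  { intros j. unfold task. destruct (of_nat j) as [u N]. destruct (of_nat u) as [m k]. simpl.
    split; [now apply ball_open|]. exists (nth k (L m) x0). rewrite Hdd.
    apply Rinv_0_lt_compat. apply (lt_0_INR (S m)); lia. }
  assert (Hstep : forall (j : nat) (s : X * R), exists s' : X * R, 0 < snd s ->
    0 < snd s' /\ (forall w, d (fst s') w <= snd s' -> d (fst s) w < snd s) /\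
    (forall w, d (fst s') w <= snd s' -> exists t, (snd (task j) <= t)%nat /\ fst (task j) (iter t f w))).
  { intros j [p rho]. destruct (Rlt_dec 0 rho) as [Hr|Hr].
    - destruct (Htask j) as [HO HOn].
      destruct (step_lemma d f Hd Hf HT p rho (fst (task j)) (snd (task j)) Hr HO HOn) as [p' [rho' H]].
      exists (p', rho'). intros _. exact H.
    - exists (p, rho). simpl; intros; contradiction. }
  destruct (choice' _ (fun js : nat * (X * R) => Hstep (fst js) (snd js))) as [g Hg].
  set (sq := fix sq (j : nat) : X * R := match j with O => (x0, 1) | S j => g (j, sq j) end).
  assert (Hpos : forall j, 0 < snd (sq j)).
  { induction j; simpl; [lra|]. apply (Hg (j, sq j) IHj). }
  assert (Hnest : forall j w, d (fst (sq (S j))) w <= snd (sq (S j)) -> d (fst (sq j)) w <= snd (sq j)).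
  { intros j w H. left. apply (Hg (j, sq j) (Hpos j)). exact H. }
  assert (Hnest2 : forall i j w, (i <= j)%nat -> d (fst (sq j)) w <= snd (sq j) -> d (fst (sq i)) w <= snd (sq i)).
  { intros i j w Hij. induction Hij; auto. }
  assert (Hdo : forall j w, d (fst (sq (S j))) w <= snd (sq (S j)) ->
     exists t, (snd (task j) <= t)%nat /\ fst (task j) (iter t f w)).
  { intros j w H. apply (Hg (j, sq j) (Hpos j)). exact H. }
  assert (Hx : exists x, forall j, d (fst (sq j)) x <= snd (sq j)).
  { apply NNPP; intros Hn.
    destruct (Hc nat (fun j w => snd (sq j) < d (fst (sq j)) w)) as [l Hl].
    - intros j w Hw. exists (d (fst (sq j)) w - snd (sq j)); split; [lra|].
      intros v Hv. pose proof (Ht (fst (sq j)) v w). rewrite (Hs v w) in H. lra.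
    - intros w. apply NNPP; intros Hw. apply Hn. exists w. intros j.
      apply Rnot_lt_le. intros Hj. apply Hw; eauto.
    - set (J := fold_right plus 0%nat l). destruct (Hl (fst (sq J))) as [j [Hj1 Hj2]].
      assert (d (fst (sq j)) (fst (sq J)) <= snd (sq j)).
      { apply (Hnest2 j J); [now apply sum_ge|]. rewrite Hdd. left; apply Hpos. }
      lra. }
  destruct Hx as [x Hx]. exists x.
  intros y eps N He.
  destruct (archimed_cor1 (eps / 2)) as [M [HM HM0]]; [lra|].
  destruct (HL (pred M) y) as [c [Hc1 Hc2]].
  replace (S (pred M)) with M in Hc2 by lia.
  destruct (In_nth _ _ x0 Hc1) as [k [_ Hk]].
  destruct (Hdo (to_nat (to_nat (pred M, k), N)) x (Hx _)) as [t [Ht1 Ht2]].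
  unfold task in Ht1, Ht2. rewrite !cancel_of_to in Ht1, Ht2. cbv beta iota zeta delta [fst snd] in Ht1, Ht2.
  rewrite Hk in Ht2. replace (S (pred M)) with M in Ht2 by lia.
  exists t; split; auto. pose proof (Ht (iter t f x) c y). rewrite (Hs (iter t f x) c) in H. lra.
Qed.

Theorem theorem4p7 (X : Type) (d : X -> X -> R) (f : X -> X)
  (Hne : inhabited X) (Hd : is_metric d) (Hc : mcompact d) (Hf : mcontinuous d f)
  (r : nat) (Hr : (1 <= r)%nat) (a : idx r -> nat) (Ha : forall i, (1 <= a i)%nat) :
  (a_transitive d f r a <-> F_point_transitive d f (nabla (Fa r a))) /\
  (F_point_transitive d f (nabla (Fa r a)) <->
     ((forall x, Trans d f x <-> TransF d f (nabla (Fa r a)) x) /\ exists x, Trans d f x)).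
Proof.
  assert (H12 : a_transitive d f r a -> F_point_transitive d f (nabla (Fa r a))).
  { intros HA. destruct (exists_trans d f Hne Hd Hc Hf) as [x Hx].
    - apply trans_unb; auto. apply a_trans_trans with r a; auto.
    - exists x. apply Trans_TransF; auto. }
  assert (H21 : F_point_transitive d f (nabla (Fa r a)) -> a_transitive d f r a).
  { intros [x Hx]. eapply two_to_one; eauto. }
  split; [split; auto|]. split.
  - intros H2. pose proof (H21 H2) as HA. split.
    + intros x; split; [intros; apply Trans_TransF; auto| apply TransF_Trans; auto].
    + destruct H2 as [x Hx]. exists x. eapply TransF_Trans; eauto.
  - intros [Heq [x Hx]]. exists x. now apply Heq.
Qed.
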